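(* $$\bigcap_{m\ge1}\mathcal{P}_m=\bigcap_{m\ge1,\ m\text{ odd}}\mathcal{P}_m=\langle A_1,A_2\rangle,$$ where $\langle A_1,A_2\rangle$ is the $\mathbb{Z}$-submodule of $\mathbb{Z}^{24}$ generated by $A_1=(1,0,-1)^8=(1,0,-1,1,0,-1,\dots,1,0,-1)$ and $A_2=(0,1,-1,-1,3,-2,-2,5,-3,-3,7,-4,-4,9,-5,-5,11,-6,-6,13,-7,-7,15,-8)$.
   Context: For a positive integer $m$, $\mathcal{P}_m$ is the set of $A\in\mathbb{Z}^{24}$ such that the orbit of $\mathrm{IAP}(\pi_m(A),\pi_m(A)X_{24})$ is $(24m,24m)$-periodic in $\mathbb{Z}/m\mathbb{Z}$. Here $\pi_m$ is reduction mod $m$; tuples are row vectors; $X_{24}=(\delta_{r,s}+\delta_{r,25-s})_{1\le r,s\le24}$. For $24$-tuples $A=(a_0,\dots,a_{23})$, $D=(d_0,\dots,d_{23})$, $\mathrm{IAP}(A,D)=(u_j)_{j\in\mathbb{Z}}$ with $u_{24q+r}=a_r+qd_r$. The orbit of $(u_j)$ is $(a_{i,j})_{(i,j)\in\mathbb{N}\times\mathbb{Z}}$ with $a_{0,j}=u_j$, $a_{i,j}=-a_{i-1,j}-a_{i-1,j+1}$; it is $(p,q)$-periodic if $a_{i+q,j}=a_{i,j+p}=a_{i,j}$ for all $(i,j)$. *)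

(* Defs.v *)
From HB Require Import structures.
From mathcomp Require Import all_boot all_order all_algebra.
Set Implicit Arguments. Unset Strict Implicit. Unset Printing Implicit Defensive.
Import Order.TTheory GRing.Theory Num.Theory.
Local Open Scope ring_scope.

(* Z/mZ for m = k.+1 is the additive group 'I_k.+1 (Zp arithmetic);
   this also covers m = 1 (the trivial group). *)
Definition piZ (k : nat) (z : int) : 'I_k.+1 := (Zp1 : 'I_k.+1) *~ z.

(* X_24 = (delta_{r,s} + delta_{r,25-s}), 1-indexed; 0-indexed: r = s or r + s = 23 *)
Definition X24 : 'M[int]_24 :=
  \matrix_(r, s) (((r == s :> nat) : nat) + ((r + s == 23)%N : nat))%:Z.

Definition rowmulZ (V : zmodType) (n : nat) (v : 'rV[V]_n) (M : 'M[int]_n)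
  : 'rV[V]_n := \row_s \sum_r (v 0 r *~ M r s).

(* IAP(A,D) = (u_j)_{j in Z}, u_{24q+r} = a_r + q d_r, 0 <= r < 24 *)
Definition IAP (V : zmodType) (A D : 'rV[V]_24) : int -> V :=
  fun j => let r : 'I_24 := inord (absz (j %% 24)%Z) in
           A 0 r + D 0 r *~ (j %/ 24)%Z.

Fixpoint orbit (V : zmodType) (u : int -> V) (i : nat) : int -> V :=
  match i with
  | 0 => u
  | i'.+1 => fun j => - orbit u i' j - orbit u i' (j + 1)
  end.

Definition periodic (V : zmodType) (a : nat -> int -> V) (p q : nat) : Prop :=
  forall (i : nat) (j : int), a (i + q)%N j = a i j /\ a i (j + p%:Z) = a i j.

(* A in P_m (meaningful for m >= 1) *)
Definition inP (m : nat) (A : 'rV[int]_24) : Prop :=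
  let piA : 'rV['I_m.-1.+1]_24 := map_mx (piZ m.-1) A in
  periodic (orbit (IAP piA (rowmulZ piA X24))) (24 * m) (24 * m).

Definition rowZ (s : seq int) : 'rV[int]_24 := \row_(i < 24) nth 0 s i.

Definition A1 : 'rV[int]_24 := rowZ
  [:: 1; 0; -1; 1; 0; -1; 1; 0; -1; 1; 0; -1; 1; 0; -1; 1; 0; -1; 1; 0; -1; 1; 0; -1].

Definition A2 : 'rV[int]_24 := rowZ
  [:: 0; 1; -1; -1; 3; -2; -2; 5; -3; -3; 7; -4; -4; 9; -5; -5; 11; -6; -6; 13; -7; -7; 15; -8].

(* Main.v *)
Require Import Defs.
From HB Require Import structures.
From mathcomp Require Import all_boot all_order all_algebra.
From mathcomp Require Import ring lra zify.
Import Order.TTheory GRing.Theory Num.Theory.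
Local Open Scope ring_scope.

Section Orb.
Variable V : zmodType.
Fixpoint orb (a : int) (u : int -> V) (i : nat) : int -> V :=
  match i with 0 => u | i'.+1 => fun j => - orb a u i' j - orb a u i' (j + a) end.

Lemma orbit_orb (u : int -> V) i j : Defs.orbit u i j = orb 1 u i j.
Proof. by elim: i j => //= i IH j; rewrite !IH. Qed.

Lemma orb_ext a (u w : int -> V) i j : (forall t, u t = w t) -> orb a u i j = orb a w i j.
Proof. by move=> h; elim: i j => //= i IH j; rewrite !IH. Qed.

Lemma orb_add a (u : int -> V) n k j : orb a u (n + k) j = orb a (orb a u k) n j.
Proof. by elim: n j => //= n IH j; rewrite !IH. Qed.

Lemma orb_shift a (u : int -> V) i j c : orb a u i (j + c) = orb a (fun t => u (t + c)) i j.
Proof. by elim: i j => //= i IH j; rewrite [j + c + a]addrAC !IH. Qed.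

Lemma orb_per a (u : int -> V) p i j : (forall t, u (t + p) = u t) -> orb a u i (j + p) = orb a u i j.
Proof. by move=> h; elim: i j => //= i IH j; rewrite addrAC !IH. Qed.

Lemma orb_perN a (u : int -> V) p i j (n : nat) : (forall t, u (t + p) = u t) -> orb a u i (j + p * n%:Z) = orb a u i j.
Proof.
move=> h; elim: n => [|n IH]; first by rewrite mulr0 addr0.
by rewrite -addn1 PoszD mulrDr mulr1 addrA orb_per.
Qed.

Lemma orb_amod a (u : int -> V) p i j : (forall t, u (t + p) = u t) -> orb (a + p) u i j = orb a u i j.
Proof. move=> h; elim: i j => //= i IH j; rewrite !IH [j + (a + p)]addrA (orb_per a u p i (j + a) h). by []. Qed.

Lemma orb_D a (u w : int -> V) i j : orb a (fun t => u t + w t) i j = orb a u i j + orb a w i j.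
Proof. by elim: i j => //= i IH j; rewrite !IH !opprD addrACA. Qed.

Lemma orb_N a (u : int -> V) i j : orb a (fun t => - u t) i j = - orb a u i j.
Proof. by elim: i j => //= i IH j; rewrite !IH opprD. Qed.
End Orb.
Arguments orb {V}.

Lemma orb_morph (V W : zmodType) (f : V -> W) (hf : forall x y, f (x - y) = f x - f y) a u i j :
  f (orb a u i j) = orb a (fun t => f (u t)) i j.
Proof.
have f0 : f 0 = 0 by rewrite -(subrr 0) hf subrr.
have fN x : f (- x) = - f x by rewrite -sub0r hf f0 sub0r.
by elim: i j => //= i IH j; rewrite hf fN !IH.
Qed.

Lemma val_Zp1n k n : val (Zp1 *+ n : 'I_k.+1) = (n %% k.+1)%N.
Proof.
elim: n => [|n IH]; first by rewrite mulr0n mod0n.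
rewrite mulrS /= IH /=. rewrite modnDm. by rewrite add1n.
Qed.

Lemma piZ_eq0 k z : piZ k z = 0 <-> (k.+1%:Z %| z)%Z.
Proof.
rewrite dvdzE /= /piZ.
have h : (Zp1 : 'I_k.+1) *~ z = 0 <-> (Zp1 : 'I_k.+1) *+ `|z|%N = 0.
  case: z => n /=; first by [].
  rewrite NegzE mulrNz -pmulrn; split => [/eqP|->]; last by rewrite oppr0.
  by rewrite oppr_eq0 => /eqP.
rewrite h /dvdn -val_Zp1n; split; first by move=> ->.
by move=> /eqP h1; apply/val_inj.
Qed.

Lemma piZ_sub k x y : piZ k (x - y) = piZ k x - piZ k y.
Proof. by rewrite /piZ mulrzBr. Qed.

Lemma piZ_eq k x y : piZ k x = piZ k y <-> (k.+1%:Z %| x - y)%Z.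
Proof. rewrite -piZ_eq0 piZ_sub; split; first by move=> ->; rewrite subrr. by move/eqP; rewrite subr_eq0 => /eqP. Qed.

Definition uZ (A : 'rV[int]_24) : int -> int := IAP A (rowmulZ A X24).
Arguments uZ : simpl never.

Lemma sum_ind (V : zmodType) (F : 'I_24 -> V) (s0 : 'I_24) (P : 'I_24 -> bool) :
  (forall r, P r = (r == s0)) -> \sum_r F r *~ (P r : nat)%:Z = F s0.
Proof.
move=> hP; rewrite (bigD1 s0) //= hP eqxx mulr1z big1 ?addr0 // => r /negbTE.
by rewrite hP => ->; rewrite mulr0z.
Qed.

Lemma rowmulX (V : zmodType) (v : 'rV[V]_24) s : rowmulZ v X24 0 s = v 0 s + v 0 (rev_ord s).
Proof.
rewrite /rowmulZ mxE.
under eq_bigr => r _ do rewrite /X24 mxE PoszD mulrzDr.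
rewrite big_split /=; congr (_ + _); apply: sum_ind => r.
  try by [].
apply/eqP/eqP => [h|->].
  by apply/val_inj => /=; move: (ltn_ord s) (ltn_ord r) h; lia.
by rewrite /=; move: (ltn_ord s); lia.
Qed.

Lemma decomp24 (j : int) : exists q (n : 'I_24), j = q * 24 + (n : nat)%:Z.
Proof.
have h0 : 0 <= (j %% 24)%Z by rewrite modz_ge0.
have h1 : (`|(j %% 24)%Z| < 24)%N.
  by have := ltz_pmod j (isT : (0 < 24 :> int)); rewrite -(gez0_abs h0) ltz_nat.
exists (j %/ 24)%Z, (Ordinal h1) => /=; rewrite gez0_abs //; exact: divz_eq.
Qed.

Lemma IAP_at (V : zmodType) (A D : 'rV[V]_24) (q : int) (n : 'I_24) :
  IAP A D (q * 24 + (n : nat)%:Z) = A 0 n + D 0 n *~ q.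
Proof.
rewrite /IAP.
have e1 : ((q * 24 + (n : nat)%:Z) %% 24)%Z = (n : nat)%:Z.
  by rewrite modzMDl modz_nat modn_small.
have e2 : ((q * 24 + (n : nat)%:Z) %/ 24)%Z = q.
  by rewrite divzMDl // divz_nat divn_small // addr0.
rewrite e1 e2 /=.
by have -> : (inord n : 'I_24) = n by apply/val_inj; rewrite /= inordK.
Qed.

Lemma IAP_pi k (A : 'rV[int]_24) j :
  IAP (map_mx (piZ k) A) (rowmulZ (map_mx (piZ k) A) X24) j = piZ k (uZ A j).
Proof.
have [q [n ->]] := decomp24 j.
rewrite /uZ !IAP_at !rowmulX !mxE /piZ mulrzDr mulrzz mulrzA mulrzDr //.
Qed.

Lemma idx24 (q : int) (n : 'I_24) :
  (inord `|((q * 24 + (n : nat)%:Z) %% 24)%Z|%N : 'I_24) = n /\ ((q * 24 + (n : nat)%:Z) %/ 24)%Z = q.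
Proof.
split; last by rewrite divzMDl // divz_nat divn_small // addr0.
by rewrite modzMDl modz_nat modn_small //; apply/val_inj; rewrite /= inordK.
Qed.

Lemma uZ_rowZ (s : seq int) q (x : int) : 0 <= x < 48 ->
  uZ (rowZ s) (q * 24 + x) =
  nth 0 s (`|x| %% 24)%N + (nth 0 s (`|x| %% 24)%N + nth 0 s (23 - `|x| %% 24)%N) * (q + (`|x| %/ 24)%N%:Z).
Proof.
case: x => // N /andP [_ hN].
have hr : (N %% 24 < 24)%N by rewrite ltn_mod.
have -> : q * 24 + N%:Z = (q + (N %/ 24)%N%:Z) * 24 + (Ordinal hr : nat)%:Z.
  by rewrite /= {1}(divn_eq N 24) PoszD PoszM mulrDl addrA.
rewrite /uZ IAP_at rowmulX !mxE mulrzz /=; by congr (_ + (_ + _) * _).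
Qed.

Definition u1 := uZ A1.
Definition u2 := uZ A2.

Lemma uZassoc A a b c : uZ A (a + b + c) = uZ A (a + (b + c)).
Proof. by rewrite addrA. Qed.

Ltac loc24 j := let q := fresh "q" in let n := fresh "n" in let hn := fresh "hn" in
  have [q [[n hn] ->]] := decomp24 j; rewrite /=;
  do 24! (case: n hn => [hn|n hn]; first by rewrite !uZassoc !uZ_rowZ //=; lia);
  try by [].


Lemma orb3s (u : int -> int) j k : orb 1 u 3 (j + k%:Z) =
  -(u (j + k%:Z) + u (j + k.+1%:Z) * 3 + u (j + k.+2%:Z) * 3 + u (j + k.+3%:Z)).
Proof.
rewrite /= -!addrA.
have -> : k%:Z + (1 + (1 + 1)) = k.+3%:Z by lia.
have -> : k%:Z + (1 + 1) = k.+2%:Z by lia.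
have -> : k%:Z + 1 = k.+1%:Z by lia.
ring.
Qed.

Lemma E1b t : u2 (t + 6%:Z) - u2 (t + 3%:Z) * 2 + u2 (t + 0%:Z) = 0.
Proof. rewrite /u2 /A2. loc24 t. Qed.
Lemma E2b t : u2 (t + 3%:Z) - u2 (t + 0%:Z) + u2 (t + 4%:Z) - u2 (t + 1%:Z) + u2 (t + 5%:Z) - u2 (t + 2%:Z) = 0.
Proof. rewrite /u2 /A2. loc24 t. Qed.
Lemma E3b t : u2 (t + 0%:Z) + u2 (t + 1%:Z) * 2 + u2 (t + 2%:Z) * 3 + u2 (t + 3%:Z) * 2 + u2 (t + 4%:Z) = 0.
Proof. rewrite /u2 /A2. loc24 t. Qed.

Definition w2 j := orb 1 u2 3 j - u2 j.

Lemma w2_3 j : orb 1 w2 3 j = w2 j.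
Proof.
have -> : j = j + 0%:Z by rewrite addr0.
rewrite orb3s /w2 !orb3s.
have := E1b j; have := E2b j; have := E3b j.
lia.
Qed.

Lemma mxMz (A : 'rV[int]_24) x i j : (A *~ x) i j = A i j *~ x.
Proof. case: x => k; first by rewrite /= mulmxnE. by rewrite NegzE !mulrNz !mxE -!pmulrn mulmxnE. Qed.

Lemma orb_scale (u : int -> int) (x : int) a i j : orb a (fun t => u t * x) i j = orb a u i j * x.
Proof.
have hf : forall y z : int, (y - z) * x = y * x - z * x by move=> ? ?; rewrite mulrBl.
by rewrite (orb_morph _ _ _ hf).
Qed.

Lemma uZ_lin A C x y j : uZ (A *~ x + C *~ y) j = uZ A j * x + uZ C j * y.
Proof.
have [q [n ->]] := decomp24 j.
rewrite /uZ !IAP_at !rowmulX ?mxE !mxMz !mulrzz; ring.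
Qed.

Lemma uZ_B A C j : uZ (A - C) j = uZ A j - uZ C j.
Proof.
have [q [n ->]] := decomp24 j.
rewrite /uZ !IAP_at !rowmulX ?mxE !mulrzz; ring.
Qed.

Lemma uZ_M A x j : uZ (A *~ x) j = uZ A j * x.
Proof.
have [q [n ->]] := decomp24 j.
rewrite /uZ !IAP_at !rowmulX ?mxE !mxMz !mulrzz; ring.
Qed.

Lemma u1_3' j : orb 1 u1 3 j = u1 j.
Proof. rewrite /= /u1 /A1. loc24 j. Qed.

Lemma u1_3k k j : orb 1 u1 (3 * k) j = u1 j.
Proof.
elim: k j => [|k IH] j; first by rewrite muln0.
by rewrite mulnS orb_add (orb_ext _ _ _ _ _ _ IH) u1_3'.
Qed.

Lemma u2_3k k j : orb 1 u2 (3 * k) j = u2 j + w2 j * k%:Z.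
Proof.
elim: k j => [|k IH] j; first by rewrite muln0 mulr0 addr0.
rewrite mulnS orb_add (orb_ext _ _ _ _ _ _ IH) orb_D orb_scale w2_3.
rewrite /w2 -(addn1 k) PoszD; ring.
Qed.

Lemma jper A (m : nat) i j :
  (m%:Z %| orb 1 (uZ A) i (j + (24 * m)%N%:Z) - orb 1 (uZ A) i j)%Z.
Proof.
have h : forall t, uZ A (t + (24 * m)%N%:Z) = uZ A t + (uZ A (t + 24) - uZ A t) * m%:Z.
  move=> t; have [q [n ->]] := decomp24 t.
  have -> : q * 24 + (n : nat)%:Z + (24 * m)%N%:Z = (q + m%:Z) * 24 + (n : nat)%:Z.
    by rewrite PoszM; ring.
  have -> : q * 24 + (n : nat)%:Z + 24 = (q + 1) * 24 + (n : nat)%:Z by ring.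
  rewrite /uZ !IAP_at !mulrzz; ring.
rewrite orb_shift (orb_ext _ _ _ _ _ _ h) orb_D orb_scale.
by rewrite addrAC subrr add0r dvdz_mull.
Qed.

Lemma span_ok A x y (m : nat) i j :
  A = A1 *~ x + A2 *~ y ->
  (m%:Z %| orb 1 (uZ A) (i + 24 * m) j - orb 1 (uZ A) i j)%Z.
Proof.
move=> ->.
have h : forall n t, orb 1 (uZ (A1 *~ x + A2 *~ y)) n t = orb 1 u1 n t * x + orb 1 u2 n t * y.
  move=> n t; rewrite (orb_ext _ _ _ _ _ _ (uZ_lin A1 A2 x y)) orb_D !orb_scale //.
have e24 : (24 * m = 3 * (8 * m))%N by rewrite mulnA.
rewrite !h !orb_add e24.
rewrite (orb_ext _ _ _ _ _ _ (u1_3k (8 * m))).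
rewrite (orb_ext _ _ _ _ _ _ (u2_3k (8 * m))).
rewrite (orb_D _ _ u2) orb_scale.
have -> : orb 1 u1 i j * x + (orb 1 u2 i j + orb 1 w2 i j * (8 * m)%N%:Z) * y -
  (orb 1 u1 i j * x + orb 1 u2 i j * y) = (orb 1 w2 i j * 8 * y) * m%:Z.
  by rewrite PoszM; ring.
by apply: dvdz_mull; apply: dvdzz.
Qed.

Definition listE (r : nat) : seq 'I_11 :=
  mkseq (fun k => ((k %% 24 == r) + ((k %% 24 == r) + (23 - k %% 24 == r)) * (k %/ 24))%N%:R) 264.
Definition stepL (a : nat) (l : seq 'I_11) : seq 'I_11 :=
  mkseq (fun k => - nth 0 l k - nth 0 l ((k + a) %% 264)) 264.
Definition Wl (a r : nat) : seq 'I_11 :=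
  let l0 := listE r in let l := iter 24 (stepL a) l0 in
  mkseq (fun k => nth 0 l k - nth 0 l0 k) 264.
Definition lsumL (c : seq (nat * nat)) (W : seq 'I_11) : 'I_11 :=
  foldr (fun p acc => p.2%:R * nth 0 W p.1 + acc) 0 c.
Definition certTab11 : seq (seq (nat * nat)) := [:: [:: (0, 9); (1, 7); (2, 3); (3, 3); (4, 8); (5, 5); (6, 8); (7, 1); (8, 9); (9, 6); (10, 4); (11, 6); (12, 2); (13, 10); (14, 8); (15, 3); (16, 4); (17, 3); (18, 4); (19, 4); (20, 3); (21, 4)]; [:: (0, 8); (1, 1); (3, 4); (4, 7); (5, 5); (6, 4); (7, 1); (8, 4); (9, 1); (10, 4); (11, 7); (12, 7); (13, 7); (14, 2); (15, 1); (16, 9); (17, 3); (18, 5); (19, 10); (20, 4)]; [:: (0, 8); (1, 5); (2, 10); (3, 1); (4, 4); (5, 1); (6, 1); (7, 6); (8, 6); (9, 7); (11, 10); (12, 10); (14, 3); (15, 5); (16, 7); (17, 8); (18, 5); (19, 1); (20, 4); (21, 7)]; [:: (0, 8); (1, 9); (3, 1); (4, 1); (5, 10); (6, 10); (7, 2); (8, 8); (9, 7); (10, 7); (11, 3); (12, 5); (13, 7); (14, 8); (15, 4); (16, 9); (17, 9); (18, 3); (19, 4); (20, 3); (21, 4)]; [:: (0, 5); (1, 7); (2, 9); (3, 1); (4, 9); (5, 5); (6, 1); (7, 6); (8, 2); (9, 1); (10, 9); (11, 8); (15, 9); (16, 5); (17, 7); (18, 2); (19, 4); (20, 8)]; [::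 (0, 9); (1, 2); (2, 2); (5, 1); (6, 7); (7, 10); (8, 3); (9, 3); (10, 5); (11, 5); (12, 10); (13, 6); (14, 7); (15, 6); (16, 10); (17, 3); (19, 9); (20, 6); (21, 7)]; [:: (0, 3); (1, 10); (2, 4); (3, 9); (4, 3); (7, 2); (8, 6); (9, 10); (10, 1); (11, 8); (12, 6); (13, 5); (15, 9); (16, 6); (17, 9); (18, 6); (19, 4); (20, 2); (21, 3)]; [:: (0, 10); (1, 3); (3, 6); (4, 4); (5, 10); (6, 3); (7, 1); (8, 3); (9, 9); (10, 9); (11, 3); (15, 7); (16, 4); (17, 4); (18, 8); (19, 6); (20, 5); (21, 3)]; [:: (0, 2); (1, 9); (2, 10); (3, 5); (4, 8); (5, 4); (6, 8); (7, 9); (8, 9); (9, 7); (10, 7); (11, 2); (12, 5); (13, 6); (15, 2); (16, 1); (17, 9); (18, 10); (19, 5); (21, 10)]; [:: (0, 3); (1, 4); (2, 1); (3, 1); (4, 7); (5, 4); (6, 4); (7, 2); (8, 3); (9, 1); (10, 7); (11, 8); (12, 10); (13, 10); (14, 7); (15, 6); (16, 3); (17, 1); (18, 6); (20, 1)]; [:: (0, 7); (2, 5); (3, 2); (4, 9); (5, 9); (6, 10); (7, 5); (8, 2); (9, 1); (10, 8); (11, 2); (12, 5); (13, 4); (14, 6); (15, 7); (16, 1); (17, 10); (18, 8); (19, 8); (20, 10); (21, 8)]; [:: (0, 3); (1, 5); (2, 8); (3, 4); (4, 8); (5, 5); (6, 1); (7, 9); (8, 1); (9, 6); (10, 5); (11,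 6); (12, 7); (13, 8); (14, 10); (15, 6); (16, 1); (17, 3); (19, 5); (20, 1); (21, 7)]; [:: (0, 2); (1, 1); (2, 5); (3, 1); (4, 10); (5, 7); (6, 4); (7, 10); (9, 10); (11, 2); (12, 1); (13, 8); (14, 6); (15, 6); (16, 4); (17, 9); (18, 1); (20, 8); (21, 6)]; [:: (0, 7); (1, 5); (2, 7); (3, 1); (4, 9); (5, 8); (6, 7); (7, 6); (8, 5); (9, 10); (10, 3); (11, 3); (12, 10); (13, 9); (14, 9); (15, 10); (16, 10); (17, 6); (18, 3); (20, 5); (21, 10)]; [:: (0, 4); (1, 1); (2, 7); (3, 1); (4, 4); (5, 2); (6, 7); (7, 9); (8, 8); (9, 8); (10, 5); (11, 4); (13, 6); (14, 4); (16, 4); (17, 6); (18, 1); (20, 1); (21, 9)]; [:: (0, 8); (1, 8); (2, 4); (3, 1); (4, 7); (5, 6); (6, 1); (8, 9); (9, 6); (11, 4); (12, 9); (13, 8); (14, 4); (15, 2); (16, 9); (18, 2); (19, 4); (20, 10); (21, 7)]; [:: (1, 6); (2, 2); (3, 7); (4, 3); (5, 4); (7, 10); (8, 4); (9, 4); (10, 7); (11, 6); (12, 7); (13, 6); (14, 5); (15, 3); (18, 10); (19, 3); (20, 4); (21, 9)]; [:: (0, 6); (1, 9); (3, 10); (4, 2); (5, 3); (6, 6); (8, 3); (9, 5); (10, 10); (11, 9); (13, 1); (14, 8); (16, 5); (17, 4); (18, 9); (19, 10); (20, 1)]; [:: (0, 10); (1, 3); (2, 1); (3, 1); (4, 4);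 (5, 3); (6, 8); (7, 1); (8, 8); (9, 10); (10, 4); (11, 5); (12, 7); (14, 1); (15, 5); (16, 1); (17, 9); (18, 1); (19, 4); (20, 1)]; [:: (0, 1); (1, 8); (2, 5); (3, 7); (4, 1); (5, 7); (6, 8); (7, 9); (9, 9); (10, 10); (11, 4); (12, 2); (13, 3); (14, 7); (15, 3); (16, 3); (17, 10); (18, 9); (19, 8); (20, 4); (21, 6)]; [:: (0, 1); (1, 3); (2, 10); (4, 3); (5, 6); (6, 5); (7, 5); (9, 4); (10, 8); (11, 3); (12, 3); (13, 10); (14, 5); (15, 5); (17, 1); (18, 3); (19, 8); (20, 7); (21, 5)]; [:: (0, 3); (1, 4); (2, 4); (3, 2); (4, 10); (5, 8); (6, 4); (7, 6); (8, 3); (9, 10); (10, 8); (11, 4); (12, 2); (13, 7); (14, 6); (15, 4); (16, 3); (17, 8); (18, 2); (19, 2); (20, 6); (21, 10)]].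
Definition certTab121 : seq (seq (nat * nat)) := [:: [:: (0, 9); (1, 7); (2, 3); (3, 3); (4, 8); (5, 5); (6, 8); (7, 1); (8, 9); (9, 6); (10, 4); (11, 6); (12, 2); (13, 10); (14, 8); (15, 3); (16, 4); (17, 3); (18, 4); (19, 4); (20, 3); (21, 4)]; [:: (0, 8); (1, 1); (3, 4); (4, 7); (5, 5); (6, 4); (7, 1); (8, 4); (9, 1); (10, 4); (11, 7); (12, 7); (13, 7); (14, 2); (15, 1); (16, 9); (17, 3); (18, 5); (19, 10); (20, 4)]; [:: (0, 8); (1, 5); (2, 10); (3, 1); (4, 4); (5, 1); (6, 1); (7, 6); (8, 6); (9, 7); (11, 10); (12, 10); (14, 3); (15, 5); (16, 7); (17, 8); (18, 5); (19, 1); (20, 4); (21, 7)]; [:: (0, 8); (1, 9); (3, 1); (4, 1); (5, 10); (6, 10); (7, 2); (8, 8); (9, 7); (10, 7); (11, 3); (12, 5); (13, 7); (14, 8); (15, 4); (16, 9); (17, 9); (18, 3); (19, 4); (20, 3); (21, 4)]; [:: (0, 5); (1, 7); (2, 9); (3, 1); (4, 9); (5, 5); (6, 1); (7, 6); (8, 2); (9, 1); (10, 9); (11, 8); (15, 9); (16, 5); (17, 7); (18, 2); (19, 4); (20, 8)]; [:: (0, 9); (1, 2); (2, 2); (5, 1); (6, 7); (7, 10); (8, 3); (9, 3); (10, 5); (11, 5); (12, 10); (13, 6); (14, 7); (15, 6); (16, 10); (17, 3); (19, 9); (20, 6); (21, 7)]; [:: (0, 3); (1, 10); (2, 4); (3,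 9); (4, 3); (7, 2); (8, 6); (9, 10); (10, 1); (11, 8); (12, 6); (13, 5); (15, 9); (16, 6); (17, 9); (18, 6); (19, 4); (20, 2); (21, 3)]; [:: (0, 10); (1, 3); (3, 6); (4, 4); (5, 10); (6, 3); (7, 1); (8, 3); (9, 9); (10, 9); (11, 3); (15, 7); (16, 4); (17, 4); (18, 8); (19, 6); (20, 5); (21, 3)]; [:: (0, 2); (1, 9); (2, 10); (3, 5); (4, 8); (5, 4); (6, 8); (7, 9); (8, 9); (9, 7); (10, 7); (11, 2); (12, 5); (13, 6); (15, 2); (16, 1); (17, 9); (18, 10); (19, 5); (21, 10)]; [:: (0, 3); (1, 4); (2, 1); (3, 1); (4, 7); (5, 4); (6, 4); (7, 2); (8, 3); (9, 1); (10, 7); (11, 8); (12, 10); (13, 10); (14, 7); (15, 6); (16, 3); (17, 1); (18, 6); (20, 1)]; [:: (0, 7); (2, 5); (3, 2); (4, 9); (5, 9); (6, 10); (7, 5); (8, 2); (9, 1); (10, 8); (11, 2); (12, 5); (13, 4); (14, 6); (15, 7); (16, 1); (17, 10); (18, 8); (19, 8); (20, 10); (21, 8)]; [:: (0, 3); (1, 5); (2, 8); (3, 4); (4, 8); (5, 5); (6, 1); (7, 9); (8, 1); (9, 6); (10, 5); (11, 6); (12, 7); (13, 8); (14, 10); (15, 6); (16, 1); (17, 3); (19, 5); (20, 1); (21, 7)]; [:: (0, 2); (1, 1); (2, 5); (3, 1); (4, 10); (5, 7); (6, 4); (7, 10); (9, 10); (11, 2); (12, 1); (13, 8); (14, 6);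 (15, 6); (16, 4); (17, 9); (18, 1); (20, 8); (21, 6)]; [:: (0, 7); (1, 5); (2, 7); (3, 1); (4, 9); (5, 8); (6, 7); (7, 6); (8, 5); (9, 10); (10, 3); (11, 3); (12, 10); (13, 9); (14, 9); (15, 10); (16, 10); (17, 6); (18, 3); (20, 5); (21, 10)]; [:: (0, 4); (1, 1); (2, 7); (3, 1); (4, 4); (5, 2); (6, 7); (7, 9); (8, 8); (9, 8); (10, 5); (11, 4); (13, 6); (14, 4); (16, 4); (17, 6); (18, 1); (20, 1); (21, 9)]; [:: (0, 8); (1, 8); (2, 4); (3, 1); (4, 7); (5, 6); (6, 1); (8, 9); (9, 6); (11, 4); (12, 9); (13, 8); (14, 4); (15, 2); (16, 9); (18, 2); (19, 4); (20, 10); (21, 7)]; [:: (1, 6); (2, 2); (3, 7); (4, 3); (5, 4); (7, 10); (8, 4); (9, 4); (10, 7); (11, 6); (12, 7); (13, 6); (14, 5); (15, 3); (18, 10); (19, 3); (20, 4); (21, 9)]; [:: (0, 6); (1, 9); (3, 10); (4, 2); (5, 3); (6, 6); (8, 3); (9, 5); (10, 10); (11, 9); (13, 1); (14, 8); (16, 5); (17, 4); (18, 9); (19, 10); (20, 1)]; [:: (0, 10); (1, 3); (2, 1); (3, 1); (4, 4); (5, 3); (6, 8); (7, 1); (8, 8); (9, 10); (10, 4); (11, 5); (12, 7); (14, 1); (15, 5); (16, 1); (17, 9); (18, 1); (19, 4); (20, 1)]; [:: (0, 1); (1, 8); (2, 5); (3, 7); (4, 1); (5, 7); (6, 8); (7,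 9); (9, 9); (10, 10); (11, 4); (12, 2); (13, 3); (14, 7); (15, 3); (16, 3); (17, 10); (18, 9); (19, 8); (20, 4); (21, 6)]; [:: (0, 1); (1, 3); (2, 10); (4, 3); (5, 6); (6, 5); (7, 5); (9, 4); (10, 8); (11, 3); (12, 3); (13, 10); (14, 5); (15, 5); (17, 1); (18, 3); (19, 8); (20, 7); (21, 5)]; [:: (0, 3); (1, 4); (2, 4); (3, 2); (4, 10); (5, 8); (6, 4); (7, 6); (8, 3); (9, 10); (10, 8); (11, 4); (12, 2); (13, 7); (14, 6); (15, 4); (16, 3); (17, 8); (18, 2); (19, 2); (20, 6); (21, 10)]].
Definition cert (a r0 : nat) := nth [::] (if a == 11%N then certTab11 else certTab121) (r0 - 2).
Definition checkr (a r : nat) (W : seq 'I_11) : bool :=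
  all (fun r0 => lsumL (cert a r0) W == (r == r0)%:R) (iota 2 22).
Definition check (a : nat) : bool :=
  all (fun r => checkr a r (Wl a r)) (iota 2 22)
  && all (fun r0 => all (fun p => (p.1 < 264)%N) (cert a r0)) (iota 2 22).
Lemma check11 : check 11. Proof. vm_compute. reflexivity. Qed.
Lemma check121 : check 121. Proof. vm_compute. reflexivity. Qed.

Section Pos.
Variable V : zmodType.
Fixpoint orbP (a : int) (u : int -> V) (n : nat) : int -> V :=
  match n with 0 => u | n'.+1 => fun j => orbP a u n' j + orbP a u n' (j + a) end.

Lemma orb_orbP a u n j : orb a u n j = if odd n then - orbP a u n j else orbP a u n j.
Proof.
elim: n j => [|n IH] j //=; rewrite !IH; case: (odd n) => /=.
  by rewrite !opprK.
by rewrite opprD.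
Qed.

Lemma orbP_closed a u n x :
  orbP a u n x = \sum_(0 <= l < n.+1) u (x + a * l%:Z) *+ 'C(n, l).
Proof.
elim: n x => [|n IH] x.
  by rewrite big_nat1 /= mulr0 addr0.
rewrite /= !IH.
rewrite (big_nat_recl n.+1) // bin0 mulr0 addr0 mulr1n.
under [in RHS]eq_bigr => i _ do rewrite binS mulrnDr.
rewrite big_split /=.
rewrite [\sum_(0 <= i < n.+1) u (x + a * i.+1%:Z) *+ 'C(n, i.+1)](big_nat_recr n) //= bin_small // mulr0n addr0.
rewrite [\sum_(0 <= l < n.+1) u (x + a * l%:Z) *+ 'C(n, l)](big_nat_recl n) // bin0 mulr0 addr0 mulr1n.
rewrite -addrA; congr (_ + _); congr (_ + _).
apply: eq_bigr => l _; congr (u _ *+ _).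
rewrite -addn1 PoszD; ring.
Qed.

End Pos.

Lemma frob11 (u : int -> 'I_11) a x :
  orb a u 11 x = - u x - u (x + a * 11%:Z).
Proof.
rewrite orb_orbP [odd 11]/= orbP_closed.
rewrite big_nat_recl // big_nat_recr // bin0 binn mulr0 addr0 !mulr1n.
rewrite big1_seq ?addr0 ?opprD ?oppr0 ?sub0r //.
move=> l /andP [_]; rewrite mem_iota => /andP [h1 h2].
have hd : (11 %| 'C(11, l.+1))%N by apply: prime_dvd_bin.
move: hd => /dvdnP [c ->].
by rewrite mulnC mulrnA (_ : _ *+ 11 = 0) ?mul0rn // -mulr_natr (_ : 11%:R = 0 :> 'I_11) ?mulr0 //; apply/eqP.
Qed.

Lemma orb_frob (u : int -> 'I_11) a n j : orb a u (11 * n) j = orb (a * 11%:Z) u n j.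
Proof.
elim: n j => [|n IH] j; first by rewrite muln0.
rewrite mulnS orb_add frob11 !IH.
by [].
Qed.

Lemma orb_pow (u : int -> 'I_11) a k j :
  orb a u (24 * 11 ^ k)%N j = orb (a * (11 ^ k)%N%:Z) u 24 j.
Proof.
elim: k a j => [|k IH] a j; first by rewrite expn0 muln1 mulr1.
have e : (24 * 11 ^ k.+1 = 11 * (24 * 11 ^ k))%N by rewrite expnS mulnCA.
rewrite e (orb_frob u a (24 * 11 ^ k)%N j) IH.
have -> : a * 11%:Z * (11 ^ k)%N%:Z = a * (11 ^ k.+1)%N%:Z by rewrite expnS PoszM mulrA.
by [].
Qed.

Definition ue (r : 'I_24) (x : int) : int :=
  let n : 'I_24 := inord `|(x %% 24)%Z| in
  ((n == r)%:R + ((n == r)%:R + (rev_ord n == r)%:R) * (x %/ 24)%Z).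

Lemma ue_at r q (n : 'I_24) :
  ue r (q * 24 + (n : nat)%:Z) = (n == r)%:R + ((n == r)%:R + (rev_ord n == r)%:R) * q.
Proof. by rewrite /ue; have [-> ->] := idx24 q n. Qed.

Lemma sumI (F : 'I_24 -> int) s0 : \sum_r F r * (s0 == r)%:R = F s0.
Proof.
rewrite (bigD1 s0) //= eqxx mulr1 big1 ?addr0 // => r hr.
by rewrite eq_sym (negbTE hr) mulr0.
Qed.

Lemma uZ_sum C x : uZ C x = \sum_r C 0 r * ue r x.
Proof.
have [q [n ->]] := decomp24 x.
have e : forall r, C 0 r * ue r (q * 24 + (n : nat)%:Z) =
   C 0 r * (n == r)%:R + (C 0 r * (n == r)%:R) * q + (C 0 r * (rev_ord n == r)%:R) * q.
  by move=> r; rewrite ue_at; ring.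
rewrite (eq_bigr _ (fun r _ => e r)) !big_split /= -!mulr_suml !sumI.
rewrite /uZ IAP_at rowmulX mulrzz; ring.
Qed.

Definition ve (r : 'I_24) (x : int) : 'I_11 := (ue r x)%:~R.

Lemma piZ11 z : piZ 10 z = z%:~R.
Proof. by []. Qed.

Lemma vC_sum C x : piZ 10 (uZ C x) = \sum_r piZ 10 (C 0 r) * ve r x.
Proof.
rewrite piZ11 uZ_sum.
rewrite (big_morph (fun z : int => z%:~R : 'I_11) (@intrD _) (mulr0z 1)).
by apply: eq_bigr => r _; rewrite intrM.
Qed.

Lemma ve_per r t : ve r (t + 264) = ve r t.
Proof.
have [q [n ->]] := decomp24 t.
have -> : q * 24 + (n : nat)%:Z + 264 = (q + 11) * 24 + (n : nat)%:Z by ring.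
rewrite /ve !ue_at mulrDr addrA intrD [(_ * 11)%:~R]intrM.
by rewrite (_ : (11%:~R : 'I_11) = 0) ?mulr0 ?addr0 //; apply/eqP.
Qed.

Lemma nth_stepL a l k : (k < 264)%N -> nth 0 (stepL a l) k = - nth 0 l k - nth 0 l ((k + a) %% 264).
Proof. by move=> hk; rewrite /stepL nth_mkseq. Qed.

Lemma orb_list (u : int -> 'I_11) (l : seq 'I_11) (a : nat) i :
  (forall t, u (t + 264) = u t) -> (forall k, (k < 264)%N -> u k%:Z = nth 0 l k) ->
  forall k, (k < 264)%N -> orb a%:Z u i k%:Z = nth 0 (iter i (stepL a) l) k.
Proof.
move=> hp hl; elim: i => [|i IH] k hk /=; first exact: hl.
rewrite nth_stepL // -IH //.
have -> : k%:Z + a%:Z = ((k + a) %% 264)%N%:Z + 264 * ((k + a) %/ 264)%N%:Z.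
  by rewrite -PoszD {1}(divn_eq (k + a) 264) PoszD PoszM; ring.
rewrite orb_perN //. rewrite (IH ((k + a) %% 264)%N) //. by rewrite ltn_pmod.
Qed.

Lemma ve_list (r : 'I_24) k : (k < 264)%N -> ve r k%:Z = nth 0 (listE r) k.
Proof.
move=> hk; rewrite /listE nth_mkseq //.
have hr : (k %% 24 < 24)%N by rewrite ltn_mod.
have -> : k%:Z = (k %/ 24)%N%:Z * 24 + (Ordinal hr : nat)%:Z.
  by rewrite /= -PoszM -PoszD -divn_eq.
rewrite /ve ue_at /=.
have -> : (rev_ord (Ordinal hr) == r) = (23 - k %% 24 == r)%N.
  by rewrite -val_eqE /= subSS.
have -> : (Ordinal hr == r) = (k %% 24 == r)%N by rewrite -val_eqE.
rewrite !natz.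
have E : forall a b c d : nat, (a%:Z + (b%:Z + c%:Z) * d%:Z) = (a + (b + c) * d)%N%:Z by move=> a b c d; rewrite PoszD PoszM PoszD.
by rewrite E.
Qed.

Lemma pow11 k : exists t, (11 ^ k.+1 = 11 + 264 * t)%N \/ (11 ^ k.+1 = 121 + 264 * t)%N.
Proof.
elim: k => [|k [t [h|h]]]; first by exists 0%N; left.
  by exists (11 * t)%N; right; rewrite expnS h; lia.
by exists (5 + 11 * t)%N; left; rewrite expnS h; lia.
Qed.

Lemma orb_amodN (V : zmodType) (u : int -> V) (a t : nat) i j :
  (forall s, u (s + 264) = u s) -> orb (a%:Z + (264 * t)%N%:Z) u i j = orb a%:Z u i j.
Proof.
move=> hp; elim: t => [|t IH]; first by rewrite muln0 addr0.
by rewrite mulnS addnC PoszD addrA orb_amod.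
Qed.

Lemma orb_sum (V : zmodType) (F : 'I_24 -> int -> V) a i j :
  orb a (fun t => \sum_r F r t) i j = \sum_r orb a (F r) i j.
Proof.
elim: i j => [|i IH] j //=.
by rewrite !IH sumrB sumrN.
Qed.

Lemma orb_lscale (c : 'I_11) (u : int -> 'I_11) a i j :
  orb a (fun t => c * u t) i j = c * orb a u i j.
Proof.
have hf : forall y z : 'I_11, c * (y - z) = c * y - c * z by move=> ? ?; rewrite mulrBr.
by rewrite (orb_morph _ _ _ hf).
Qed.

Definition lsumF (cs : seq (nat * nat)) (f : nat -> 'I_11) : 'I_11 :=
  foldr (fun p acc => p.2%:R * f p.1 + acc) 0 cs.

Lemma lsumF_lin cs (c : 'I_24 -> 'I_11) f :
  lsumF cs (fun k => \sum_r c r * f r k) = \sum_r c r * lsumF cs (f r).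
Proof.
elim: cs => [|p cs IH] /=; first by rewrite big1 // => r _; rewrite mulr0.
rewrite IH mulr_sumr -big_split; apply: eq_bigr => r _ /=.
by rewrite mulrDr mulrCA.
Qed.

Lemma lsumF0 cs f : (forall p, p \in cs -> f p.1 = 0) -> lsumF cs f = 0.
Proof.
elim: cs => [|p cs IH] //= h.
by rewrite h ?mem_head // mulr0 add0r IH // => q hq; apply: h; rewrite inE hq orbT.
Qed.

Lemma sumI11 (F : 'I_24 -> 'I_11) (s0 : 'I_24) : \sum_r F r * ((r : nat) == s0)%:R = F s0.
Proof.
rewrite (bigD1 s0) //= eqxx mulr1 big1 ?addr0 // => r hr.
by rewrite (_ : ((r : nat) == s0) = false) ?mulr0 //; apply/negbTE.
Qed.

Lemma fin (a0 : nat) (c : 'I_24 -> 'I_11) : check a0 ->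
  (forall k, (k < 264)%N -> \sum_r c r * nth 0 (Wl a0 r) k = 0) ->
  (forall r : 'I_24, (r < 2)%N -> c r = 0) -> forall r, c r = 0.
Proof.
move=> /andP [hc hpos] hZ hlow r0.
case: (ltnP r0 2) => hr0; first exact: hlow.
have m0 : (r0 : nat) \in iota 2 22 by rewrite mem_iota hr0 /= (ltn_ord r0).
have : lsumF (cert a0 r0) (fun k => \sum_r c r * nth 0 (Wl a0 r) k) = 0.
  apply: lsumF0 => p hp; apply: hZ.
  by move/allP: hpos => /(_ _ m0) /allP /(_ _ hp).
rewrite lsumF_lin (eq_bigr (fun r => c r * ((r : nat) == r0)%:R)) ?sumI11 //.
move=> r _; case: (ltnP r 2) => hr; first by rewrite hlow // !mul0r.
have mr : (r : nat) \in iota 2 22 by rewrite mem_iota hr /= (ltn_ord r).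
by move/allP: hc => /(_ _ mr) /allP /(_ _ m0) /eqP <-.
Qed.

Lemma Wl_orb (a0 : nat) (r : 'I_24) k : (k < 264)%N ->
  orb a0%:Z (ve r) 24 k%:Z - ve r k%:Z = nth 0 (Wl a0 r) k.
Proof.
move=> hk; rewrite /Wl nth_mkseq // (orb_list (ve r) (listE r) a0 24) //.
- by rewrite ve_list.
- exact: ve_per.
- by move=> k' hk'; rewrite ve_list.
Qed.

Lemma key11 (C : 'rV[int]_24) (e : nat) : C 0 0 = 0 -> C 0 1 = 0 ->
  (forall j, ((10.+1)%:Z %| orb 1 (uZ C) (24 * 11 ^ e.+1)%N j - uZ C j)%Z) ->
  forall r, ((10.+1)%:Z %| C ord0 r)%Z.
Proof.
move=> h0 h1 H r; apply/piZ_eq0.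
set c := fun r => piZ 10 (C 0 r).
have H1 : forall j, \sum_r c r * (orb 1 (ve r) (24 * 11 ^ e.+1)%N j - ve r j) = 0.
  move=> j; have := (proj2 (piZ_eq 10 _ _)) (H j).
  rewrite (orb_morph _ _ _ (piZ_sub 10)) (orb_ext _ _ _ _ _ _ (vC_sum C)) orb_sum vC_sum.
  under eq_bigr do rewrite orb_lscale.
  by move=> hj; rewrite (eq_bigr (fun r => c r * orb 1 (ve r) (24 * 11 ^ e.+1)%N j - c r * ve r j)) ?sumrB ?hj ?subrr // => r' _; rewrite mulrBr.
have hlow : forall r : 'I_24, (r < 2)%N -> c r = 0.
  move=> [[|[|n]] hn] //= _.
    by rewrite /c (_ : Ordinal hn = 0) ?h0 //; apply/val_inj.
  by rewrite /c (_ : Ordinal hn = 1) ?h1 //; apply/val_inj.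
have [t [ht|ht]] := pow11 e.
- apply: (fin 11 c check11 _ hlow) => k hk; rewrite -[RHS](H1 k%:Z); apply: eq_bigr => r' _; congr (_ * _).
  by rewrite -Wl_orb // orb_pow mul1r ht PoszD orb_amodN //; exact: ve_per.
- apply: (fin 121 c check121 _ hlow) => k hk; rewrite -[RHS](H1 k%:Z); apply: eq_bigr => r' _; congr (_ * _).
  by rewrite -Wl_orb // orb_pow mul1r ht PoszD orb_amodN //; exact: ve_per.
Qed.

Lemma orbit_pi k A i j :
  Defs.orbit (IAP (map_mx (piZ k) A) (rowmulZ (map_mx (piZ k) A) X24)) i j = piZ k (orb 1 (uZ A) i j).
Proof.
by rewrite orbit_orb (orb_ext _ _ _ _ _ _ (IAP_pi k A)) (orb_morph _ _ _ (piZ_sub k)).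
Qed.

Lemma inP_iff m A : (0 < m)%N -> inP m A <->
  (forall i j, (m%:Z %| orb 1 (uZ A) (i + 24 * m)%N j - orb 1 (uZ A) i j)%Z).
Proof.
case: m => // k _; rewrite /inP /periodic /=; split.
  by move=> H i j; have [h1 _] := H i j; move: h1; rewrite !orbit_pi => /piZ_eq.
move=> H i j; rewrite !orbit_pi; split; apply/piZ_eq; first exact: H.
exact: jper.
Qed.

Lemma orb_B (u w : int -> int) a i j : orb a (fun t => u t - w t) i j = orb a u i j - orb a w i j.
Proof. by rewrite orb_D orb_N. Qed.

Lemma small_dvd (n : nat) (x : int) : (n%:Z %| x)%Z -> (`|x| < n)%N -> x = 0.
Proof.
rewrite dvdzE /= => hd hl; apply/eqP; rewrite -absz_eq0; apply/negPn/negP => hx.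
have := dvdn_leq _ hd; rewrite lt0n hx => /(_ isT); lia.
Qed.

Lemma zero_B (B : 'rV[int]_24) : B 0 0 = 0 -> B 0 1 = 0 ->
  (forall m, (0 < m)%N -> odd m -> forall j,
     (m%:Z %| orb 1 (uZ B) (0 + 24 * m)%N j - orb 1 (uZ B) 0 j)%Z) -> B = 0.
Proof.
move=> h0 h1 H.
have D : forall e r, ((11 ^ e)%N%:Z %| B ord0 r)%Z.
  elim=> [|e IH] r; first by rewrite expn0 dvd1z.
  pose C : 'rV[int]_24 := \row_r' ((B ord0 r') %/ (11 ^ e)%N%:Z)%Z.
  have hB : B = C *~ (11 ^ e)%N%:Z.
    by apply/rowP => r'; rewrite mxMz mxE mulrzz divzK.
  have hC0 : C 0 0 = 0 by rewrite mxE h0 div0z.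
  have hC1 : C 0 1 = 0 by rewrite mxE h1 div0z.
  have hCj : forall j, ((10.+1)%:Z %| orb 1 (uZ C) (24 * 11 ^ e.+1)%N j - uZ C j)%Z.
    move=> j; have := H (11 ^ e.+1)%N; rewrite expn_gt0 oddX /= => /(_ isT isT j).
    rewrite add0n hB (orb_ext _ _ _ _ _ _ (uZ_M C _)) orb_scale /= uZ_M -mulrBl.
    by rewrite expnS PoszM dvdz_mul2r // -lt0n expn_gt0.
  have := key11 C e hC0 hC1 hCj r.
  rewrite hB mxMz mulrzz expnS PoszM => hd.
  by apply: dvdz_mul.
apply/rowP => r; rewrite mxE.
apply: (small_dvd (11 ^ `|B ord0 r|)%N); first exact: D.
exact: ltn_expl.
Qed.

Lemma A1_00 : A1 0 0 = 1. Proof. by rewrite /A1 /rowZ mxE. Qed.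
Lemma A1_01 : A1 0 1 = 0. Proof. by rewrite /A1 /rowZ mxE. Qed.
Lemma A2_00 : A2 0 0 = 0. Proof. by rewrite /A2 /rowZ mxE. Qed.
Lemma A2_01 : A2 0 1 = 1. Proof. by rewrite /A2 /rowZ mxE. Qed.

Theorem theorem15 :
  forall A : 'rV[int]_24,
    ((forall m : nat, (0 < m)%N -> inP m A) <->
     (forall m : nat, (0 < m)%N -> odd m -> inP m A)) /\
    ((forall m : nat, (0 < m)%N -> odd m -> inP m A) <->
     (exists x y : int, A = A1 *~ x + A2 *~ y)).
Proof.
move=> A.
have part1 : (exists x y : int, A = A1 *~ x + A2 *~ y) -> forall m, (0 < m)%N -> inP m A.
  move=> [x [y hA]] m hm; apply/(inP_iff m A hm) => i j.
  exact: (span_ok A x y m i j hA).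
have part2 : (forall m : nat, (0 < m)%N -> odd m -> inP m A) -> exists x y : int, A = A1 *~ x + A2 *~ y.
  move=> H; exists (A 0 0), (A 0 1).
  apply: subr0_eq; apply: zero_B.
  - by rewrite !mxE !mxMz !mulrzz A1_00 A2_00; ring.
  - by rewrite !mxE !mxMz !mulrzz A1_01 A2_01; ring.
  move=> m hm hodd j.
  have h1 := (proj1 (inP_iff m A hm)) (H m hm hodd) 0%N j.
  have h2 := span_ok _ (A 0 0) (A 0 1) m 0%N j (erefl _).
  rewrite (orb_ext _ _ _ _ _ _ (uZ_B A _)) orb_B.
  rewrite (orb_ext _ _ _ _ _ _ (uZ_B A _)) orb_B.
  have -> : forall a b c d : int, a - b - (c - d) = (a - c) - (b - d) by move=> *; ring.
  exact: rpredB.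
split; split.
- by move=> H m hm _; apply: H.
- by move=> H; apply: part1; apply: part2.
- exact: part2.
- by move=> hs m hm _; apply: part1.
Qed.
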